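(* Let $M\in\mathrm{M}_n(\mathbb{K})$ be a cyclic matrix with minimal polynomial $f\in\mathbb{K}[x]$, and let $\mathcal{C}\subseteq\mathbb{L}^n$ be an $M$-cyclic code with generator polynomial $g\in\mathbb{L}[x]$; write $f=gh$. Then $\mathcal{C}^\perp$ is an $M^t$-cyclic code (with $M^t$ cyclic with minimal polynomial $f$), and its generator polynomial is $h$.
   Context: Let $\mathbb{L}/\mathbb{K}$ be a field extension of finite degree $m\ge n$. Vectors are row vectors; $\mathcal{C}^\perp=\{c'\in\mathbb{L}^n:\sum_jc'_jc_j=0\ \forall c\in\mathcal{C}\}$. A matrix $A\in\mathrm{M}_n(\mathbb{K})$ is cyclic if there is $v\in\mathbb{K}^n$ (a cyclic vector) with $(v,vA^t,\dots,v(A^t)^{n-1})$ a basis; equivalently its minimal polynomial $f$ has degree $n$. An $A$-cyclic code is an $\mathbb{L}$-subspace $\mathcal{C}\subseteq\mathbb{L}^n$ with $cA^t\in\mathcal{C}$ for all $c\in\mathcal{C}$. For a monic divisor $g$ of $f$ in $\mathbb{L}[x]$, $\mathcal{C}_g=\{v\,g(A)^tP(A)^t:P\in\mathbb{L}[x]\}$ (independent of the cyclic vector $v\in\mathbb{K}^n$, of dimension $n-\deg g$); every $A$-cyclic code equals $\mathcal{C}_g$ for a unique monic divisor $g$ of $f$, its generator polynomial. *)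

(* Defs.v *)
From HB Require Import structures.
From mathcomp Require Import all_boot all_order all_algebra all_field.
Set Implicit Arguments. Unset Strict Implicit. Unset Printing Implicit Defensive.
Import GRing.Theory.
Local Open Scope ring_scope.

(* Vectors are row vectors; codes are L-subspaces of L^n, represented as the
   row space of a matrix (mxalgebra, %MS). Length is n.+1. *)

Definition cyclic_vec (F : fieldType) (n : nat) (A : 'M[F]_n) (v : 'rV[F]_n) :=
  let B := \matrix_(i < n) (v *m (A^T) ^+ i) in row_free B && row_full B.

Definition cyclic_mx (F : fieldType) (n : nat) (A : 'M[F]_n) :=
  exists v : 'rV[F]_n, cyclic_vec A v.

Definition cyclic_code (L : fieldType) (n k : nat) (A : 'M[L]_n)
  (C : 'M[L]_(k, n)) := (C *m A^T <= C)%MS.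

Definition dual_code (L : fieldType) (n k : nat) (C : 'M[L]_(k, n)) : 'M[L]_n :=
  kermx C^T.

Definition mxL (K : fieldType) (L : fieldExtType K) (m n : nat)
  (A : 'M[K]_(m, n)) : 'M[L]_(m, n) := map_mx (in_alg L) A.

Definition is_Cg (K : fieldType) (L : fieldExtType K) (n k : nat)
  (A : 'M[K]_n.+1) (v : 'rV[K]_n.+1) (g : {poly L}) (C : 'M[L]_(k, n.+1)) :=
  forall x : 'rV[L]_n.+1,
    (x <= C)%MS <->
    exists P : {poly L},
      x = mxL L v *m (horner_mx (mxL L A) g)^T *m (horner_mx (mxL L A) P)^T.

Definition generator_poly (K : fieldType) (L : fieldExtType K) (n k : nat)
  (A : 'M[K]_n.+1) (C : 'M[L]_(k, n.+1)) (g : {poly L}) :=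
  [/\ g \is monic, g %| map_poly (in_alg L) (mxminpoly A)
    & exists2 v, cyclic_vec A v & is_Cg A v g C].

(* Main.v *)
Require Import Defs.
From HB Require Import structures.
From mathcomp Require Import all_boot all_order all_algebra all_field.
From mathcomp Require Import zify.
Import GRing.Theory.
Local Open Scope ring_scope.
Set Implicit Arguments. Unset Strict Implicit.

Lemma row_free_of (F : fieldType) m n (G : 'M[F]_(m, n)) :
  (forall x : 'rV_m, x *m G = 0 -> x = 0) -> row_free G.
Proof.
move=> H; rewrite -kermx_eq0; apply/eqP/row_matrixP => i; rewrite row0.
by apply: H; rewrite -row_mul mulmx_ker row0.
Qed.

Lemma horner_mx_sum (F : fieldType) n (A : 'M[F]_n.+1) (p : {poly F}) m :
  (size p <= m)%N -> horner_mx A p = \sum_(i < m) p`_i *: A ^+ i.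
Proof.
move=> sp.
have -> : horner_mx A p = horner_mx A (\poly_(i < m) p`_i).
  congr horner_mx; apply/polyP => i; rewrite coef_poly; case: ltnP => // hi.
  by rewrite nth_default // (leq_trans sp hi).
rewrite poly_def rmorph_sum; apply: eq_bigr => i _.
change (horner_mx A (p`_i *: 'X^i) = p`_i *: A ^+ i).
by rewrite horner_mxZ rmorphXn /= horner_mx_X.
Qed.

Lemma trmx_expr (F : fieldType) n (A : 'M[F]_n.+1) i : (A ^+ i)^T = A^T ^+ i.
Proof.
elim: i => [|i IH]; first by rewrite !expr0 trmx1.
by rewrite exprS trmx_mul IH exprSr.
Qed.

Lemma trmx_horner (F : fieldType) n (A : 'M[F]_n.+1) p :
  (horner_mx A p)^T = horner_mx A^T p.
Proof.
rewrite (horner_mx_sum A (leqnn (size p))) (horner_mx_sum A^T (leqnn (size p))) linear_sum; apply: eq_bigr => i _.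
by rewrite linearZ /= trmx_expr.
Qed.

Definition krylov (F : fieldType) n (A : 'M[F]_n) (u : 'rV_n) :=
  \matrix_(i < n) (u *m A ^+ i).

Lemma horner_rowE (F : fieldType) n (A : 'M[F]_n.+1) (u : 'rV[F]_n.+1) (p : {poly F}) :
  (size p <= n.+1)%N ->
  u *m horner_mx A p = (\row_(i < n.+1) p`_i) *m krylov A u.
Proof.
move=> sp; rewrite (horner_mx_sum A sp) mulmx_sumr mulmx_sum_row.
by apply: eq_bigr => i _; rewrite mxE rowK scalemxAr.
Qed.

Lemma horner_inj (F : fieldType) n (A : 'M[F]_n.+1) (u : 'rV[F]_n.+1) (p : {poly F}) :
  row_free (krylov A u) -> (size p <= n.+1)%N ->
  u *m horner_mx A p = 0 -> p = 0.
Proof.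
move=> fr sp; rewrite horner_rowE // => /eqP.
rewrite -(mul0mx _ (krylov A u)) (inj_eq (row_free_inj fr)) => /eqP H.
apply/polyP => i; rewrite coef0; case: (ltnP i n.+1) => hi.
  by have := congr1 (fun x : 'rV[F]_n.+1 => x 0 (Ordinal hi)) H; rewrite !mxE.
by rewrite nth_default // (leq_trans sp hi).
Qed.

Section Gen.
Variables (F : fieldType) (n : nat) (A : 'M[F]_n.+1) (u : 'rV[F]_n.+1) (p : {poly F}).

Definition genmx := \matrix_(i < n.+2 - size p) (u *m horner_mx A (p * 'X^i)).

Lemma genmxE (y : 'rV_(n.+2 - size p)) :
  y *m genmx = u *m horner_mx A (p * rVpoly y).
Proof.
rewrite mulmx_sum_row /rVpoly poly_def mulr_sumr rmorph_sum mulmx_sumr.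
apply: eq_bigr => i _; rewrite valK rowK -scalerAr.
change (y 0 i *: (u *m horner_mx A (p * 'X^i)) =
  u *m horner_mx A (y 0 i *: (p * 'X^i))).
by rewrite horner_mxZ scalemxAr.
Qed.

Lemma genmx_free : row_free (krylov A u) -> p != 0 ->
  row_free genmx.
Proof.
move=> fr p0; apply: row_free_of => y.
case: (leqP (size p) n.+1) => sp; last first.
  by move=> _; apply/rowP => i; have := ltn_ord i; lia.
rewrite genmxE => /horner_inj-/(_ fr).
have sq : (size (rVpoly y) <= n.+2 - size p)%N by apply: size_poly.
have hs := size_polyMleq p (rVpoly y).
have : (0 < size p)%N by rewrite size_poly_gt0.
move=> p1 H.
have /eqP : p * rVpoly y = 0 by apply: H; apply: (leq_trans hs); lia.
rewrite mulf_eq0 (negPf p0) /= => /eqP q0.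
by rewrite -[y]rVpolyK q0 linear0.
Qed.
End Gen.

Lemma map_krylov (K : fieldType) (L : fieldExtType K) n (A : 'M[K]_n.+1) u :
  mxL L (krylov A u) = krylov (mxL L A) (mxL L u).
Proof.
apply/row_matrixP => i; rewrite /mxL -map_row !rowK map_mxM.
congr (_ *m _); elim: (nat_of_ord i) => [|j IH]; first by rewrite !expr0 map_mx1.
by rewrite !exprS map_mxM IH.
Qed.

Lemma minpoly_tr (K : fieldType) n (M : 'M[K]_n.+1) :
  mxminpoly M^T = mxminpoly M.
Proof.
apply/eqP; rewrite -eqp_monic ?mxminpoly_monic //; apply/andP; split;
  apply: mxminpoly_min.
  by rewrite -trmx_horner mx_root_minpoly trmx0.
by apply: trmx_inj; rewrite trmx_horner mx_root_minpoly trmx0.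
Qed.

Lemma cyclic_tr (K : fieldType) n (M : 'M[K]_n.+1) v :
  krylov M^T v \in unitmx -> exists w, krylov M w \in unitmx.
Proof.
move=> Bu; set B := krylov M^T v.
pose e : 'cV[K]_n.+1 := delta_mx ord_max 0.
exists (invmx B *m e)^T.
have key : forall p : {poly K}, (size p <= n.+1)%N ->
    v *m horner_mx M^T p *m (invmx B *m e) = (p`_n)%:M.
  move=> p sp; rewrite horner_rowE // -/B mulmxA -(mulmxA _ B) mulmxV //.
  rewrite mulmx1; apply/matrixP => i j; rewrite !ord1 !mxE.
  rewrite (bigD1 ord_max) //= !mxE eqxx /= mulr1 big1 ?addr0 //.
  by move=> k /negPf nk; rewrite !mxE nk mulr0.
rewrite -row_free_unit; apply: row_free_of => x.
rewrite -[x]rVpolyK.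
set q := rVpoly x.
have sq : (size q <= n.+1)%N by apply: size_poly.
have -> : poly_rV q *m krylov M (invmx B *m e)^T = (invmx B *m e)^T *m horner_mx M q.
  rewrite horner_rowE //; congr (_ *m _); apply/rowP => i; rewrite !mxE.
case/boolP: (q == 0) => [/eqP -> _|q0 H]; first by rewrite linear0.
exfalso.
have sq1 : (0 < size q)%N by rewrite size_poly_gt0.
have : v *m horner_mx M^T (q * 'X^(n.+1 - size q)) *m (invmx B *m e) = 0.
  rewrite -trmx_horner rmorphM /= -[X in _ *m X]trmxK -mulmxA -trmx_mul.
  by rewrite mulmxA H mul0mx trmx0 mulmx0.
rewrite key; last by rewrite size_mulXn //; lia.
rewrite coefMXn.
have -> : (n < n.+1 - size q)%N = false by lia.
have -> : (n - (n.+1 - size q) = (size q).-1)%N by lia.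
move/matrixP => /(_ 0 0); rewrite !mxE /= mulr1n => /eqP.
by rewrite -lead_coefE lead_coef_eq0 (negPf q0).
Qed.

Theorem proposition4 (K : fieldType) (L : fieldExtType K) (n k : nat)
  (M : 'M[K]_n.+1) (C : 'M[L]_(k, n.+1)) (g h : {poly L}) :
  (n.+1 <= \dim {: L})%N ->
  cyclic_mx M ->
  cyclic_code (mxL L M) C ->
  generator_poly M C g ->
  map_poly (in_alg L) (mxminpoly M) = g * h ->
  [/\ cyclic_mx M^T, mxminpoly M^T = mxminpoly M,
      cyclic_code (mxL L M^T) (dual_code C)
    & generator_poly M^T (dual_code C) h].
Proof.
move=> _ _ cC [gm gdiv [v vcyc vCg]] fgh.
have vU : krylov M^T v \in unitmx.
  by rewrite -row_free_unit; case/andP: vcyc.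
have [w wU] := cyclic_tr vU.
have wcyc : cyclic_vec M^T w.
  by rewrite /cyclic_vec trmxK -/(krylov M w) row_free_unit row_full_unit wU.
have mT : mxL L M^T = (mxL L M)^T by rewrite /mxL map_trmx.
set N := mxL L M in mT cC *.
have hm : h \is monic by rewrite -(monicMl _ gm) -fgh map_monic mxminpoly_monic.
have fN : horner_mx N (map_poly (in_alg L) (mxminpoly M)) = 0.
  by rewrite /N /mxL -map_horner_mx mx_root_minpoly map_mx0.
have fNT : horner_mx N^T (map_poly (in_alg L) (mxminpoly M)) = 0.
  by rewrite -trmx_horner fN trmx0.
have HM : forall (A : 'M[L]_n.+1) p q,
    horner_mx A p *m horner_mx A q = horner_mx A (p * q).
  by move=> A p q; rewrite rmorphM mulmxE.
have HM' : forall m (X : 'M[L]_(m, n.+1)) (A : 'M[L]_n.+1) p q,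
    X *m horner_mx A p *m horner_mx A q = X *m horner_mx A (p * q).
  by move=> m X A p q; rewrite -mulmxA HM.
have back : forall P, (mxL L w *m horner_mx N (h * P) <= dual_code C)%MS.
  move=> P; apply/sub_kermxP; apply: trmx_inj.
  rewrite trmx_mul trmxK trmx0; apply/row_matrixP => i; rewrite row0 row_mul.
  have [Q ->] := (vCg (row i C)).1 (row_sub i C).
  rewrite -/N !trmx_horner trmx_mul trmx_horner !mulmxA !HM'.
  have -> : g * (Q * (h * P)) = (g * h) * (Q * P).
    by rewrite -!mulrA; congr (_ * _); rewrite mulrCA.
  by rewrite -fgh rmorphM /= fNT mul0r mulmx0 mul0mx.
have hN : forall P : {poly L}, mxL L w *m (horner_mx (mxL L M^T) h)^T *m
    (horner_mx (mxL L M^T) P)^T = mxL L w *m horner_mx N (h * P).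
  by move=> P; rewrite mT !trmx_horner !trmxK HM'.
have sf : (size (mxminpoly M) <= n.+2)%N.
  rewrite -(size_char_poly M); apply: dvdp_leq; last exact: mxminpoly_dvd_char.
  by rewrite -size_poly_eq0 size_char_poly.
have g0 : g != 0 by apply: monic_neq0.
have h0 : h != 0 by apply: monic_neq0.
have sgh : (size g + size h = (size (mxminpoly M)).+1)%N.
  have := size_map_poly (in_alg L) (mxminpoly M); rewrite fgh size_mul //.
  have : (0 < size g)%N by rewrite size_poly_gt0.
  have : (0 < size h)%N by rewrite size_poly_gt0.
  by move=> _ g1 <-; rewrite prednK // addn_gt0 g1.
split.
- by exists w.
- exact: minpoly_tr.
- rewrite /cyclic_code /dual_code mT trmxK.
  have [D HD] := submxP cC.
  apply/sub_kermxP.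
  have E : N *m C^T = C^T *m D^T by rewrite -[N]trmxK -trmx_mul HD trmx_mul.
  by rewrite -mulmxA E mulmxA mulmx_ker mul0mx.
split => //.
  by rewrite minpoly_tr fgh dvdp_mulIr.
exists w => // x; split; last by case=> P ->; rewrite hN; exact: back.
move=> xK.
pose T := genmx N (mxL L w) h.
pose G := genmx N^T (mxL L v) g.
have TK : (T <= dual_code C)%MS.
  by apply/row_subP => i; rewrite rowK; exact: back.
have GC : (G <= C)%MS.
  apply/row_subP => i; rewrite rowK; apply/(vCg _).2; exists 'X^i.
  by rewrite -/N !trmx_horner HM'.
have rkT : \rank T = (n.+2 - size h)%N.
  apply/eqP; apply: genmx_free => //.
  by rewrite -map_krylov row_free_unit map_unitmx.
have rkG : \rank G = (n.+2 - size g)%N.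
  apply/eqP; apply: genmx_free => //.
  by rewrite -mT -map_krylov row_free_unit map_unitmx.
have rC := mxrankS GC.
have rK : \rank (dual_code C) = (n.+1 - \rank C)%N.
  by rewrite /dual_code mxrank_ker mxrank_tr.
have KT : (dual_code C <= T)%MS.
  rewrite -(mxrank_leqif_sup TK).2 eqn_leq mxrankS //=.
  rewrite rK rkT; move: rC; rewrite rkG; lia.
have [D ->] := submxP (submx_trans xK KT).
by exists (rVpoly D); rewrite hN genmxE.
Qed.
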